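(* Let a project have countable state space $\mathbb{X}$, transition probabilities $p(i,j)$ such that for every $i$, $|\{j:p(i,j)>0\}|\le N$, bounded active rewards $R(i)$, discount factor $0<\beta\le1$, horizon $T$, and initial state $i_0$. Let $\mathbb{X}_s(i_0)$ be the (finite) set of states reachable from $i_0$ within $s$ transitions, and let $\mathbb{Y}_T^{\{0,1\}}(i_0)=\{(d,i):1\le d\le T,\ i\in\mathbb{X}_{T-d}(i_0)\}$. For $(d,i)$ with $1\le d\le T$ define $$\lambda^*(d,i)=\max_{1\le\tau\le d}\frac{\mathsf{E}_i^{\tau}\big[\sum_{t=0}^{\tau-1}\beta^tR(X(t))\big]}{\mathsf{E}_i^{\tau}\big[\sum_{t=0}^{\tau-1}\beta^t\big]}.$$ Consider the auxiliary project with state space $\mathbb{Y}_T^{\{0,1\}}(i_0)\cup\{(0,\Omega)\}$ in which, under the active action, $(d,i)$ with $d\ge2$ moves to $(d-1,j)$ with probability $p(i,j)$, $(1,i)$ moves to the absorbing state $(0,\Omega)$, and the active reward is $R^1(d,i)=R(i)$; and let $$G'(d,i)=\max_{1\le\tau\le d}\frac{\mathsf{E}_{(d,i)}^{\tau}\big[\sum_{t=0}^{\tau-1}\beta^tR^1(Y(t))\big]}{\mathsf{E}_{(d,i)}^{\tau}\big[\sum_{t=0}^{\tau-1}\beta^t\big]}$$ for $(d,i)\in\mathbb{Y}_T^{\{0,1\}}(i_0)$, $Y(t)$ being the auxiliary project's state engaged from $Y(0)=(d,i)$. Then $\lambda^*(d,i)=G'(d,i)$ for all $(d,i)\in\ma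thbb{Y}_T^{\{0,1\}}(i_0)$.
   Context: The state $X(t)$ evolves as a Markov chain with transition probabilities $p(i,j)$ each time the project is engaged; stopping times are with respect to the history of the process. Note that if $i\in\mathbb{X}_{T-d}(i_0)$, all states reachable within $d-1$ further transitions lie in $\mathbb{X}_{T-1}(i_0)$ with correspondingly smaller remaining times, so the auxiliary project is well defined. *)

(* Defs.v *)
From mathcomp Require Import all_boot all_order all_algebra.
Set Implicit Arguments.
Unset Strict Implicit.
Unset Printing Implicit Defensive.
Import Order.TTheory GRing.Theory Num.Theory.
Local Open Scope ring_scope.

(* A generic discrete Markov project: states of type S, transition
   probabilities p, and an explicit list succ x of the states j with
   p x j > 0 (finite support). *)

(* Stopping times 1 <= tau <= k w.r.t. the history: a rule
   cont : seq S -> bool; after engaging at times 0..t-1 and observing the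
   history [:: X(0); ...; X(t)], the project is engaged again at time t
   iff cont [:: X(0); ...; X(t)] holds and t < k.  Hence
   tau = min(k, first t >= 1 with ~~ cont (X(0..t))).

   exp_disc cont f k h x = E[ sum_{t=0}^{tau-1} beta^t f(X(t)) ]
   computed for the process currently at x with history h (ending in x),
   with at most k remaining engagements (k >= 1 means "engage now"). *)
Fixpoint exp_disc (R : realFieldType) (S : Type) (p : S -> S -> R)
    (succ : S -> seq S) (beta : R) (cont : seq S -> bool) (f : S -> R)
    (k : nat) (h : seq S) (x : S) : R :=
  match k with
  | 0 => 0
  | k'.+1 => f x + beta * \sum_(j <- succ x)
              p x j * (if cont (rcons h j)
                       then exp_disc p succ beta cont f k' (rcons h j) j
                       else 0)
  end.

Definition index_ratio (R : realFieldType) (S : Type) (p : S -> S -> R)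
    (succ : S -> seq S) (beta : R) (f : S -> R) (d : nat)
    (cont : seq S -> bool) (x : S) : R :=
  exp_disc p succ beta cont f d [:: x] x /
  exp_disc p succ beta cont (fun _ => 1) d [:: x] x.

Definition is_max_index (R : realFieldType) (S : Type) (p : S -> S -> R)
    (succ : S -> seq S) (beta : R) (f : S -> R) (d : nat) (x : S) (v : R)
    : Prop :=
  (exists cont, index_ratio p succ beta f d cont x = v) /\
  (forall cont, index_ratio p succ beta f d cont x <= v).

Fixpoint reachable (R : realFieldType) (X : Type) (p : X -> X -> R)
    (s : nat) (i0 j : X) : Prop :=
  match s with
  | 0 => j = i0
  | s'.+1 => reachable p s' i0 j \/ exists k, reachable p s' i0 k /\ 0 < p k j
  end.

(* Auxiliary project: Some (d, i) is the state (d, i), None is (0, Omega). *)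
Definition aux_p (R : realFieldType) (X : Type) (p : X -> X -> R)
    (y z : option (nat * X)) : R :=
  match y, z with
  | Some (d, i), Some (d', j) => if (1 < d)%N && (d' == d.-1) then p i j else 0
  | Some (d, _), None => if (d <= 1)%N then 1 else 0
  | None, None => 1
  | None, Some _ => 0
  end.

Definition aux_succ (X : Type) (supp : X -> seq X) (y : option (nat * X))
    : seq (option (nat * X)) :=
  match y with
  | Some (d, i) => if (1 < d)%N then map (fun j => Some (d.-1, j)) (supp i)
                   else [:: None]
  | None => [:: None]
  end.

Definition aux_R (R : realFieldType) (X : Type) (r : X -> R)
    (y : option (nat * X)) : R :=
  match y with
  | Some (_, i) => r i
  | None => 0
  end.

(* Main.v *)
Require Import Defs.
From mathcomp Require Import all_boot all_order all_algebra.
From mathcomp Require Import zify.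
Set Implicit Arguments.
Unset Strict Implicit.
Import Order.TTheory GRing.Theory Num.Theory.
Local Open Scope ring_scope.

Section Fin.
Variables (R : realFieldType) (S : eqType) (p : S -> S -> R)
  (succ : S -> seq S) (beta : R).

Fixpoint hist (k : nat) (h : seq S) (x : S) : seq (seq S) :=
  match k with
  | 0 => [::]
  | k'.+1 => flatten [seq rcons h j :: hist k' (rcons h j) j | j <- succ x]
  end.

Lemma mem_hist k h x j g : j \in succ x ->
  g \in rcons h j :: hist k (rcons h j) j -> g \in hist k.+1 h x.
Proof.
move=> Hj Hg /=; apply/flattenP; exists (rcons h j :: hist k (rcons h j) j) => //.
by apply/mapP; exists j.
Qed.

Lemma exp_disc_ext f k : forall h x (c1 c2 : seq S -> bool),
  {in hist k h x, c1 =1 c2} ->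
  exp_disc p succ beta c1 f k h x = exp_disc p succ beta c2 f k h x.
Proof.
elim: k => [//|k IH] h x c1 c2 H /=.
congr (_ + _ * _); apply: eq_big_seq => j Hj.
rewrite H; last by apply: (mem_hist Hj); rewrite // inE eqxx.
rewrite (IH _ _ c1 c2) // => g Hg; apply: H; apply: (mem_hist Hj) => //.
by rewrite inE Hg orbT.
Qed.
End Fin.

Fixpoint subs (T : eqType) (s : seq T) : seq (seq T) :=
  match s with
  | [::] => [:: [::]]
  | a :: s' => subs s' ++ map (cons a) (subs s')
  end.

Lemma filter_subs (T : eqType) (a : pred T) s : filter a s \in subs s.
Proof.
elim: s => [|b s IH] /=; first by rewrite inE.
case: (a b); rewrite mem_cat ?IH //.
by apply/orP; right; apply: map_f.
Qed.

Lemma seq_max (R : realFieldType) (l : seq R) (a : R) :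
  exists v, v \in a :: l /\ forall y, y \in a :: l -> y <= v.
Proof.
elim: l a => [|b l IH] a.
  by exists a; split; [rewrite inE | move=> y; rewrite inE => /eqP ->].
have [v [Hv Hm]] := IH b.
case: (leP a v) => H.
  exists v; split; first by rewrite inE Hv orbT.
  by move=> y; rewrite inE => /orP [/eqP -> // | /Hm].
exists a; split; first by rewrite inE eqxx.
move=> y; rewrite inE => /orP [/eqP -> // | /Hm Hy].
by apply: (le_trans Hy); apply: ltW.
Qed.

Lemma max_exists (R : realFieldType) (S : eqType) (p : S -> S -> R)
  (succ : S -> seq S) (beta : R) (f : S -> R) d x :
  exists v, is_max_index p succ beta f d x v.
Proof.
set H := hist succ d [:: x] x.
pose rat (s : seq (seq S)) := index_ratio p succ beta f d (fun g => g \in s) x.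
have Hc : forall c, index_ratio p succ beta f d c x = rat (filter c H).
  move=> c; rewrite /rat /index_ratio.
  by rewrite (exp_disc_ext _ _ _ (c1:=c) (c2:=fun g => g \in filter c H))
     1?(exp_disc_ext _ _ _ (c1:=c) (c2:=fun g => g \in filter c H)) //
     => g Hg; rewrite mem_filter Hg andbT.
have [v [Hv Hm]] := seq_max (map rat (subs H)) (rat [::]).
exists v; split.
  move: Hv; rewrite inE => /orP [/eqP -> | /mapP [s _ ->]].
    by exists (fun g => g \in [::]).
  by exists (fun g => g \in s).
move=> c; rewrite Hc; apply: Hm; rewrite inE; apply/orP; right.
by apply: map_f; apply: filter_subs.
Qed.

Section Corr.
Variables (R : realFieldType) (X : Type) (p : X -> X -> R) (supp : X -> seq X)
  (beta : R).
Notation Y := (option (nat * X)).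

Lemma corr (P : nat -> seq X -> seq Y -> Prop) (c : seq X -> bool)
  (c' : seq Y -> bool) (f : X -> R) (g : Y -> R) :
  (forall n x, g (Some (n, x)) = f x) ->
  (forall k h h' j, P k.+1 h h' ->
     P k (rcons h j) (rcons h' (Some (k, j))) /\
     c (rcons h j) = c' (rcons h' (Some (k, j)))) ->
  forall k h h' x, P k h h' ->
  exp_disc p supp beta c f k h x =
  exp_disc (aux_p p) (aux_succ supp) beta c' g k h' (Some (k, x)).
Proof.
move=> Hg HP; elim=> [//|k IH] h h' x HPk /=.
rewrite Hg; congr (_ + _ * _).
case: k IH HPk => [|k] IH HPk.
  rewrite /=.
  rewrite big_cons big_nil /= if_same mulr0 addr0.
  by apply: big1 => j _; rewrite if_same mulr0.
rewrite [(1 < k.+2)%N]/= big_map; apply: eq_bigr => j _.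
have [HP1 Hc] := HP _ _ _ j HPk.
rewrite Hc (IH _ _ _ HP1); congr (_ * _).
by rewrite /= eqxx.
Qed.
End Corr.

Fixpoint labd (X : Type) (d : nat) (g : seq X) : seq (option (nat * X)) :=
  match g with
  | [::] => [::]
  | x :: g' => Some (d, x) :: labd d.-1 g'
  end.

Lemma labd_rcons (X : Type) (h : seq X) : forall d j,
  labd d (rcons h j) = rcons (labd d h) (Some ((d - size h)%N, j)).
Proof.
elim: h => [|x h IH] d j /=; first by rewrite subn0.
rewrite IH; congr (_ :: rcons _ (Some (_, _))); lia.
Qed.

Theorem proposition6 (R : realFieldType) (X : countType)
    (p : X -> X -> R) (supp : X -> seq X) (N : nat) (r : X -> R)
    (beta : R) (T : nat) (i0 : X) :
  (forall i j, 0 <= p i j) ->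
  (forall i j, (0 < p i j) = (j \in supp i)) ->
  (forall i, uniq (supp i)) ->
  (forall i, (size (supp i) <= N)%N) ->
  (forall i, \sum_(j <- supp i) p i j = 1) ->
  (exists M : R, forall i, `|r i| <= M) ->
  0 < beta -> beta <= 1 ->
  forall (d : nat) (i : X), (1 <= d <= T)%N -> reachable p (T - d) i0 i ->
  exists v : R,
    is_max_index p supp beta r d i v /\
    is_max_index (aux_p p) (aux_succ supp) beta (aux_R r) d (Some (d, i)) v.
Proof.
move=> _ _ _ _ _ _ _ _ d i _ _.
have [v [[c Hc] Hm]] := max_exists p supp beta r d i.
pose strip (y : option (nat * X)) := if y is Some (_, x) then x else i.
have HA : forall (c : seq X -> bool) (f : X -> R) (g : option (nat * X) -> R),
    (forall n x, g (Some (n, x)) = f x) ->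
    exp_disc p supp beta c f d [:: i] i =
    exp_disc (aux_p p) (aux_succ supp) beta (fun y => c (map strip y)) g d
      [:: Some (d, i)] (Some (d, i)).
  move=> c0 f g Hg.
  apply: (@corr _ _ _ _ _ (fun _ h h' => map strip h' = h)) => //.
  by move=> k h h' j <-; rewrite map_rcons.
have HB : forall (c' : seq (option (nat * X)) -> bool) (f : X -> R)
    (g : option (nat * X) -> R),
    (forall n x, g (Some (n, x)) = f x) ->
    exp_disc p supp beta (fun h => c' (labd d h)) f d [:: i] i =
    exp_disc (aux_p p) (aux_succ supp) beta c' g d
      [:: Some (d, i)] (Some (d, i)).
  move=> c' f g Hg.
  apply: (@corr _ _ _ _ _
    (fun k h h' => h' = labd d h /\ (size h + k = d.+1)%N)) => //.
  move=> k h h' j [-> Hs]; rewrite labd_rcons.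
  have -> : (d - size h)%N = k by lia.
  by split=> //; split=> //; rewrite size_rcons; lia.
exists v; split; first by split=> //; exists c.
split.
  exists (fun y => c (map strip y)); rewrite -Hc /index_ratio.
  by rewrite -(HA _ r) // -(HA _ (fun _ => 1)).
move=> c'; rewrite /index_ratio -(HB _ r) // -(HB _ (fun _ => 1)) //.
exact: Hm.
Qed.
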